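(* Let $X$ be an irreducible positive recurrent Markov chain on a countable state space $S$ with transition matrix $P$ and stationary distribution $\pi$. Fix a finite nonempty $K\subseteq S$ and finite sets $A_n\supseteq K$ with $A_n\nearrow S$. For each $n$ let $T_n=\inf\{j\ge1:X_j\notin A_n\}$, $T_K=\inf\{j\ge1:X_j\in K\}$, and assume the matrix $G_n(x,y)=P_x(X_{T_K}=y,\,T_K<T_n)$, $x,y\in K$, is irreducible. Let $u_n(x)=P_x(T_K<T_n)$ for $x\in A_n$, $S_n'=\{x\in A_n:u_n(x)>0\}$, and define the stochastic matrix $R_n$ on $S_n'$ by $R_n(x,y)=P(x,y)/u_n(x)$ for $x\in S_n'$, $y\in K$, and $R_n(x,y)=P(x,y)u_n(y)/u_n(x)$ for $x\in S'_n$, $y\in S'_n\setminus K$. Let $S_n''\supseteq K$ be the unique closed communicating class of $R_n$, and let $\pi^*_{3n}$ be the unique stationary distribution of $R_n$ restricted to $S_n''$, extended to $S$ by $\pi^*_{3n}(x)=0$ for $x\notin S_n''$. Then for each $x\in S$, $\pi^*_{3n}(x)\to\pi(x)$ as $n\to\infty$.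
   Context: $P_x$ denotes the law of the chain started at $x$. Under the irreducibility of $G_n$, $S_n'$ contains a single closed communicating class of $R_n$, which contains $K$, and $R_n$ restricted to it is irreducible; $R_n$ describes the dynamics of $X$ conditioned on $T_K<T_n$. *)

(* Defs.v *)
From HB Require Import structures.
From mathcomp Require Import all_boot all_order all_algebra.
From mathcomp Require Import all_classical all_reals all_analysis.
Set Implicit Arguments. Unset Strict Implicit. Unset Printing Implicit Defensive.
Import Order.TTheory GRing.Theory Num.Theory.
Local Open Scope classical_set_scope.
Local Open Scope ring_scope.

Section MC.
Variables (R : realType) (T : countType).
Implicit Types (P : T -> T -> R).

Definition stochastic P : Prop :=
  (forall x y, 0 <= P x y) /\ (forall x, \esum_(y in [set: T]) (P x y)%:E = 1%E).

Definition leads_to P (x y : T) : Prop :=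
  exists s : seq T, path (fun a b => 0 < P a b) x s /\ last x s = y.

Definition irreducible P : Prop := forall x y, leads_to P x y.

(* taboo P B m x y = P_x(X_{m+1} = y, X_1, ..., X_m \in B). *)
Fixpoint taboo P (B : set T) (m : nat) (x y : T) : \bar R :=
  match m with
  | 0 => (P x y)%:E
  | m'.+1 => \esum_(z in B) ((P x z)%:E * taboo P B m' z y)%E
  end.

(* P_x(T_x = m+1), T_x = inf {j >= 1 : X_j = x} *)
Definition first_return P (x : T) (m : nat) : \bar R :=
  taboo P (~` [set x]) m x x.

Definition positive_recurrent P : Prop :=
  forall x, \esum_(m in [set: nat]) first_return P x m = 1%E /\
            (\esum_(m in [set: nat]) ((m.+1)%:R%:E * first_return P x m)%E < +oo)%E.

Definition stationary_distribution P (pi : T -> R) : Prop :=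
  (forall x, 0 <= pi x) /\ \esum_(x in [set: T]) (pi x)%:E = 1%E /\
  (forall y, \esum_(x in [set: T]) (pi x * P x y)%:E = (pi y)%:E).

(* G_A(x,y) = P_x(X_{T_K} = y, T_K < T_A), where T_K = inf{j>=1 : X_j \in K},
   T_A = inf{j>=1 : X_j \notin A}, and K `<=` A. *)
Definition Gmat P (K A : set T) (x y : T) : \bar R :=
  \esum_(m in [set: nat]) taboo P (A `\` K) m x y.

(* u_A(x) = P_x(T_K < T_A) *)
Definition uvec P (K A : set T) (x : T) : \bar R :=
  \esum_(m in [set: nat]) \esum_(y in K) taboo P (A `\` K) m x y.

Definition irreducible_on (K : set T) (M : T -> T -> \bar R) : Prop :=
  forall x y, K x -> K y ->
    exists s : seq T, all (fun z => `[< K z >]) s /\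
      path (fun a b => (0 < M a b)%E) x s /\ last x s = y.

Definition Sprime P (K A : set T) : set T :=
  [set x | A x /\ (0 < uvec P K A x)%E].

Definition Rmat P (K A : set T) (x y : T) : R :=
  let u := fun z => fine (uvec P K A z) in
  if `[< Sprime P K A x >] && `[< Sprime P K A y >] then
    (if `[< K y >] then P x y / u x else P x y * u y / u x)
  else 0.

Definition closed_comm_class (S : set T) (Q : T -> T -> R) (C : set T) : Prop :=
  C `<=` S /\ C !=set0 /\
  (forall x y, C x -> C y -> leads_to Q x y) /\
  (forall x y, C x -> S y -> 0 < Q x y -> C y).

Definition stationary_on (C : set T) (Q : T -> T -> R) (p : T -> R) : Prop :=
  (forall x, 0 <= p x) /\ (forall x, ~ C x -> p x = 0) /\
  \esum_(x in C) (p x)%:E = 1%E /\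
  (forall y, C y -> \esum_(x in C) (p x * Q x y)%:E = (p y)%:E).

End MC.

(* Main.v *)
Require Import Defs.
From HB Require Import structures.
From mathcomp Require Import all_boot all_order all_algebra.
From mathcomp Require Import all_classical all_reals all_analysis.
From mathcomp Require Import ring lra.
Set Implicit Arguments. Unset Strict Implicit. Unset Printing Implicit Defensive.
Import Order.TTheory GRing.Theory Num.Theory.
Import numFieldNormedType.Exports.
Local Open Scope classical_set_scope.
Local Open Scope ring_scope.

Section Aux.
Variables (R : realType) (T : choiceType).

Definition en (D : set T) : seq T := finmap.enum_fset (fset_set D).
Lemma en_uniq D : uniq (en D). Proof. exact: finmap.fset_uniq. Qed.
Lemma mem_en D x : finite_set D -> (x \in en D) = `[< D x >].
Proof. by move=> fD; rewrite /en in_fset_set // inE. Qed.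

Lemma esum_seqE (D : set T) (f : T -> \bar R) : finite_set D ->
  (forall x, D x -> (0 <= f x)%E) -> \esum_(x in D) f x = \sum_(x <- en D) f x.
Proof. by move=> fD f0; rewrite esum_fset ?fsbig_finite // => i; rewrite inE; exact: f0. Qed.

Lemma sum_le_esum (D : set T) (s : seq T) (f : T -> R) : uniq s ->
  (forall x, x \in s -> D x) -> 
  ((\sum_(x <- s) f x)%:E <= \esum_(x in D) (f x)%:E)%E.
Proof.
move=> us sD; apply: esum_ge; exists [set` s]; first by split => // x /= /sD.
by rewrite -fsbig_seq // sumEFin.
Qed.

Lemma esum_le_l (D : set T) (f : T -> R) (l : R) (s : seq T) :
  \esum_(x in D) (f x)%:E = l%:E -> uniq s -> (forall x, x \in s -> D x) ->
  \sum_(x <- s) f x <= l.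
Proof. by move=> h us sD; rewrite -lee_fin -h sum_le_esum. Qed.

Lemma esum_approx (D : set T) (f : T -> R) (l : R) (eps : R) :
  \esum_(x in D) (f x)%:E = l%:E -> 0 < eps -> 
  exists s : seq T, [/\ uniq s, (forall x, x \in s -> D x) & l - eps < \sum_(x <- s) f x].
Proof.
move=> h e0.
have : ((l - eps)%:E < \esum_(x in D) (f x)%:E)%E by rewrite h lte_fin; lra.
move=> /ereal_sup_gt [_ [X [finX XD] <-]].
rewrite fsbig_finite // sumEFin lte_fin => hl.
exists (en X); split => //; first exact: en_uniq.
by move=> x; rewrite mem_en // => /asboolP /XD.
Qed.

Lemma sum_sub (s t : seq T) (f : T -> R) : uniq s -> uniq t -> {subset s <= t} ->
  (forall x, x \in t -> 0 <= f x) -> \sum_(x <- s) f x <= \sum_(x <- t) f x.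
Proof.
move=> us ut st f0.
have e : \sum_(x <- s) f x = \sum_(x <- t | x \in s) f x.
  rewrite -[RHS]big_filter; apply: perm_big; apply: uniq_perm => //.
    exact: filter_uniq.
  by move=> x; rewrite mem_filter; apply/idP/andP => [xs|[]//]; split => //; exact: st.
rewrite e [X in _ <= X](bigID (fun x => x \in s)) /= lerDl big_seq_cond.
apply: sumr_ge0 => x /andP[xt _]; exact: f0.
Qed.

Lemma term_le_sum (s : seq T) (f : T -> R) x : x \in s ->
  (forall y, y \in s -> 0 <= f y) -> f x <= \sum_(y <- s) f y.
Proof.
move=> xs f0; rewrite (big_rem x xs) /= lerDl big_seq; apply: sumr_ge0 => y yr.
by apply: f0; exact: (mem_rem yr).
Qed.

Lemma argmax_seq (s : seq T) (f : T -> R) x0 : x0 \in s ->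
  exists2 x, x \in s & forall y, y \in s -> f y <= f x.
Proof.
elim: s x0 => [//|a s IH] x0 _.
case: s IH => [|b s] IH.
  by exists a; [exact: mem_head | move=> y; rewrite mem_seq1 => /eqP->].
have [x xs hx] := IH b (mem_head _ _).
case: (leP (f a) (f x)) => h.
  exists x; first by rewrite in_cons xs orbT.
  by move=> y; rewrite in_cons => /orP[/eqP->|/hx].
exists a; first exact: mem_head.
move=> y; rewrite in_cons => /orP[/eqP->//|/hx hy]; exact: (le_trans hy (ltW h)).
Qed.

End Aux.

Section Paths.
Variables (R : realType) (T : choiceType) (P : T -> T -> R).
Local Notation pos := (fun a b => 0 < P a b).

Lemma path_bwd (x0 : T) (s : seq T) : path pos x0 s ->
  exists C : R, 0 <= C /\ forall (d : T -> R) (e : R),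
    (forall a b, d a * P a b <= d b + e) -> (forall z, 0 <= d z) -> 0 <= e ->
    d x0 <= C * (d (last x0 s) + e).
Proof.
elim: s x0 => [|y s IH] x0 /=.
  move=> _; exists 1; split => // d e _ d0 e0; lra.
move=> /andP[pxy hp]; have [C [C0 HC]] := IH y hp.
exists ((C + 1) / P x0 y); split.
  by apply: divr_ge0 => //; [lra | exact: ltW].
move=> d e hd d0 e0.
rewrite mulrAC ler_pdivlMr //.
have h1 := hd x0 y; have h2 := HC d e hd d0 e0.
have := d0 (last y s); nra.
Qed.

Lemma path_fwd (x0 : T) (s : seq T) : path pos x0 s ->
  exists C : R, 0 <= C /\ forall (v : T -> R) (e : R) (Q : pred T),
    (forall a b, Q b -> v b * P a b <= v a + e) -> all Q s ->
    (forall z, 0 <= v z) -> 0 <= e ->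
    v (last x0 s) <= C * (v x0 + e).
Proof.
elim: s x0 => [|y s IH] x0 /=.
  move=> _; exists 1; split => // v e Q _ _ v0 e0; lra.
move=> /andP[pxy hp]; have [C [C0 HC]] := IH y hp.
exists (C * ((P x0 y)^-1 + 1)); split.
  apply: mulr_ge0 => //; apply: addr_ge0 => //; rewrite invr_ge0; exact: ltW.
move=> v e Q hv /andP[Qy Qs] v0 e0.
have h2 := HC v e Q hv Qs v0 e0.
have h1 : v y <= (v x0 + e) / P x0 y by rewrite ler_pdivlMr //; exact: hv.
apply: (le_trans h2).
have : (v x0 + e) / P x0 y = (P x0 y)^-1 * (v x0 + e) by rewrite mulrC.
have := v0 x0; have := invr_gt0 (P x0 y); rewrite pxy => hi.
move=> hv0 e1; rewrite e1 in h1.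
have := v0 y. nra.
Qed.

Lemma path_lastK (Kb : pred T) (r : rel T) (s : seq T) (x0 : T) : path r x0 s ->
  exists k s', [/\ k = x0 \/ Kb k, all (predC Kb) s', path r k s' & last k s' = last x0 s].
Proof.
elim: s x0 => [|y s IH] x0 /=.
  by move=> _; exists x0, [::]; split => //; left.
move=> /andP[rxy hp]; have [k [s' [hk hall hp' hl]]] := IH y hp.
case: hk => [ek|Kk]; last by exists k, s'; split => //; right.
subst k; case Ky: (Kb y); first by exists y, s'; split => //; right.
exists x0, (y :: s'); split => //=; first by left.
- by rewrite Ky hall.
- by rewrite rxy hp'.
Qed.

End Paths.

Section Chain.
Variables (R : realType) (T : countType) (P : T -> T -> R).
Hypothesis hP : stochastic P.

Lemma P_ge0 x y : 0 <= P x y. Proof. exact: hP.1. Qed.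

Lemma stoch_le1 x (s : seq T) : uniq s -> \sum_(y <- s) P x y <= 1.
Proof. by move=> us; apply: (@esum_le_l _ _ setT) => //; exact: hP.2. Qed.

Lemma stoch_approx x eps : 0 < eps ->
  exists s : seq T, uniq s /\ 1 - eps < \sum_(y <- s) P x y.
Proof. by move=> e0; have [s [us _ h]] := esum_approx (hP.2 x) e0; exists s. Qed.

Fixpoint tab (B : set T) (m : nat) (x y : T) : R :=
  match m with 0 => P x y | m'.+1 => \sum_(z <- en B) P x z * tab B m' z y end.

Lemma tab_ge0 B m x y : 0 <= tab B m x y.
Proof.
elim: m x y => [|m IH] x y /=; first exact: P_ge0.
by apply: sumr_ge0 => z _; apply: mulr_ge0; [exact: P_ge0|exact: IH].
Qed.

Lemma tabooE B m x y : finite_set B -> taboo P B m x y = (tab B m x y)%:E.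
Proof.
move=> fB; elim: m x y => [//|m IH] x y /=.
rewrite esum_seqE //; last by move=> z _; rewrite IH -EFinM lee_fin; apply: mulr_ge0; [exact: P_ge0|exact: tab_ge0].
rewrite -sumEFin; apply: eq_bigr => z _; by rewrite IH -EFinM.
Qed.


Variable pi : T -> R.
Hypothesis hpi : stationary_distribution P pi.

Lemma pi_ge0 x : 0 <= pi x. Proof. exact: hpi.1. Qed.
Lemma pi_le1 s : uniq s -> \sum_(x <- s) pi x <= 1.
Proof. by move=> us; apply: (@esum_le_l _ _ setT) => //; exact: hpi.2.1. Qed.
Lemma pi_approx eps : 0 < eps -> exists s : seq T, uniq s /\ 1 - eps < \sum_(x <- s) pi x.
Proof. by move=> e0; have [s [us _ h]] := esum_approx hpi.2.1 e0; exists s. Qed.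
Lemma piP_le s y : uniq s -> \sum_(x <- s) pi x * P x y <= pi y.
Proof. by move=> us; apply: (@esum_le_l _ _ setT) => //; exact: hpi.2.2. Qed.
Lemma pi_le1x x : pi x <= 1.
Proof. by have := @pi_le1 [:: x]; rewrite big_seq1; apply. Qed.

Lemma pi_pos (hirr : irreducible P) x : 0 < pi x.
Proof.
have [x0 hx0] : exists x0, 0 < pi x0.
  apply: contrapT => H.
  have : \esum_(x in [set: T]) (pi x)%:E = 0%E.
    apply: esum1 => y _; congr EFin; apply/eqP; rewrite eq_le pi_ge0 andbT.
    by rewrite leNgt; apply/negP => hy; apply: H; exists y.
  by rewrite hpi.2.1 => /eqP; rewrite eqe oner_eq0.
have [s [hp <-]] := hirr x0 x.
elim: s x0 hx0 hp => [//|y s IH] x0 hx0 /= /andP[pxy hp]; apply: IH hp.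
have := @piP_le [:: x0] y; rewrite big_seq1 => /(_ erefl) h.
by apply: lt_le_trans h; apply: mulr_gt0.
Qed.

Section U.
Variables (K A : set T).
Hypotheses (fA : finite_set A) (KA : K `<=` A).
Let B := A `\` K.
Let fB : finite_set B. Proof. exact: (sub_finite_set (@subDsetl _ A K) fA). Qed.
Let fK : finite_set K. Proof. exact: (sub_finite_set KA fA). Qed.

Definition fm x m := \sum_(y <- en K) tab B m x y.
Definition uu x := fine (uvec P K A x).

Lemma fm_ge0 x m : 0 <= fm x m.
Proof. by apply: sumr_ge0 => y _; exact: tab_ge0. Qed.

Lemma uvecE x : uvec P K A x = (\sum_(m <oo) (fm x m)%:E)%E.
Proof.
rewrite nneseries_esumT; last by move=> m; rewrite lee_fin fm_ge0.
apply: eq_esum => m _; rewrite esum_seqE //; last by move=> y _; rewrite tabooE // lee_fin tab_ge0.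
by rewrite /fm -sumEFin; apply: eq_bigr => y _; rewrite tabooE.
Qed.

Lemma fmS x m : fm x m.+1 = \sum_(z <- en B) P x z * fm z m.
Proof.
rewrite /fm /= exchange_big; apply: eq_bigr => z _; by rewrite mulr_sumr.
Qed.

Lemma KB_uniq : uniq (en K ++ en B).
Proof.
rewrite cat_uniq !en_uniq /= andbT; apply/hasPn => z; rewrite mem_en // => /asboolP [_ nK].
by rewrite mem_en //; apply/asboolP.
Qed.

Lemma KB_le1 x : \sum_(y <- en K) P x y + \sum_(z <- en B) P x z <= 1.
Proof. by rewrite -big_cat; apply: stoch_le1; exact: KB_uniq. Qed.

Lemma fm_part M x : \sum_(m < M) fm x m <= 1.
Proof.
elim: M x => [|M IH] x; first by rewrite big_ord0.
rewrite big_ord_recl.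
under eq_bigr => i _ do rewrite lift0 fmS.
rewrite exchange_big /=.
under eq_bigr => z _ do rewrite -mulr_sumr.
apply: le_trans (KB_le1 x); apply: lerD; first by [].
by apply: ler_sum => z _; rewrite -[X in _ <= X]mulr1; apply: ler_wpM2l; [exact: P_ge0|exact: IH].
Qed.

Lemma uvec_bounds x : uvec P K A x = (uu x)%:E /\ 0 <= uu x <= 1.
Proof.
have h1 : (uvec P K A x <= 1)%E.
  rewrite uvecE; apply: lime_le; first by apply: is_cvg_nneseries => n _; rewrite lee_fin fm_ge0.
  by apply: nearW => M /=; rewrite sumEFin lee_fin big_mkord; exact: fm_part.
have h0 : (0 <= uvec P K A x)%E.
  by rewrite uvecE; apply: nneseries_ge0 => n _ _; rewrite lee_fin fm_ge0.
have hf : uvec P K A x \is a fin_num by rewrite ge0_fin_numE // (le_lt_trans h1) // ltry.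
split; first by rewrite /uu fineK.
by apply/andP; split; rewrite -lee_fin /uu fineK.
Qed.

Lemma uu_ge0 x : 0 <= uu x. Proof. by have [_ /andP[]] := uvec_bounds x. Qed.
Lemma uu_le1 x : uu x <= 1. Proof. by have [_ /andP[]] := uvec_bounds x. Qed.

Lemma U2 x : uu x = \sum_(y <- en K) P x y + \sum_(z <- en B) P x z * uu z.
Proof.
apply: EFin_inj; rewrite -(uvec_bounds x).1 uvecE.
rewrite nneseries_recl //; last by move=> k _; rewrite lee_fin fm_ge0.
rewrite -nneseries_addn; last by move=> k; rewrite lee_fin fm_ge0.
under eq_eseriesr => m _ do rewrite addn1 fmS -sumEFin.
under eq_eseriesr => m _ do under eq_bigr => z _ do rewrite EFinM.
rewrite nneseries_sum; last by move=> z m _; rewrite -EFinM lee_fin mulr_ge0 ?P_ge0 ?fm_ge0.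
rewrite EFinD; congr (_ + _)%E.
rewrite -sumEFin; apply: eq_bigr => z _.
rewrite nneseriesZl; last by move=> i _; rewrite lee_fin fm_ge0.
by rewrite -uvecE (uvec_bounds z).1 EFinM.
Qed.

Lemma B_mem z : (z \in en B) = `[< A z /\ ~ K z >].
Proof. by rewrite mem_en. Qed.

Lemma sumA (g : T -> R) : \sum_(z <- en A) g z = \sum_(z <- en K) g z + \sum_(z <- en B) g z.
Proof.
rewrite -big_cat; apply: perm_big; apply: uniq_perm; [exact: en_uniq|exact: KB_uniq|].
move=> z; rewrite mem_cat !mem_en //; apply/asboolP/orP => [Az|[/asboolP Kz|/asboolP [Az _]]] //.
- by case: (pselect (K z)) => Kz; [left|right]; apply/asboolP.
- exact: KA.
Qed.

Definition ee := \sum_(k <- en K) pi k * (1 - uu k).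

Lemma ee_ge0 : 0 <= ee.
Proof. by apply: sumr_ge0 => k _; apply: mulr_ge0; [exact: pi_ge0|rewrite subr_ge0 uu_le1]. Qed.

Lemma piK_le_ee k : K k -> pi k * (1 - uu k) <= ee.
Proof.
move=> Kk; apply: (term_le_sum (f := fun k => pi k * (1 - uu k))).
  by rewrite mem_en //; apply/asboolP.
by move=> y _; apply: mulr_ge0; [exact: pi_ge0|rewrite subr_ge0 uu_le1].
Qed.

Lemma e_bound : ee <= \sum_(z <- en A) pi z - \sum_(y <- en A) pi y * \sum_(z <- en A) P y z.
Proof.
pose S z := \sum_(y <- en A) pi y * P y z.
have hX : \sum_(y <- en A) pi y * uu y = \sum_(z <- en K) S z + \sum_(z <- en B) S z * uu z.
  under eq_bigr => y _ do rewrite U2 mulrDr.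
  rewrite big_split /=; congr (_ + _).
    under eq_bigr => y _ do rewrite mulr_sumr.
    by rewrite exchange_big.
  under eq_bigr => y _ do rewrite mulr_sumr.
  rewrite exchange_big /=; apply: eq_bigr => z _; rewrite /S mulr_suml.
  by apply: eq_bigr => y _; rewrite mulrA.
have hY : \sum_(y <- en A) pi y * \sum_(z <- en A) P y z = \sum_(z <- en K) S z + \sum_(z <- en B) S z.
  rewrite -sumA; under eq_bigr => y _ do rewrite mulr_sumr.
  by rewrite exchange_big.
have hE : ee = \sum_(k <- en K) pi k - \sum_(k <- en K) pi k * uu k.
  by rewrite /ee -sumrB; apply: eq_bigr => k _; rewrite mulrBr mulr1.
have hX2 := sumA (fun y => pi y * uu y).
have hpos : 0 <= \sum_(z <- en B) (pi z - S z) * (1 - uu z).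
  apply: sumr_ge0 => z _; apply: mulr_ge0; last by rewrite subr_ge0 uu_le1.
  by rewrite subr_ge0; apply: piP_le; exact: en_uniq.
have hexp : \sum_(z <- en B) (pi z - S z) * (1 - uu z) =
   \sum_(z <- en B) pi z - \sum_(z <- en B) S z - \sum_(z <- en B) pi z * uu z
   + \sum_(z <- en B) S z * uu z.
  rewrite -!sumrB -big_split /=; apply: eq_bigr => z _; ring.
have hA := sumA pi.
rewrite hA hY hE; rewrite hX in hX2; lra.
Qed.

Lemma v_step a b : B b -> (1 - uu b) * P a b <= (1 - uu a) + 0.
Proof.
move=> Bb; rewrite addr0.
have h1 := U2 a; have h2 := KB_le1 a.
have h3 : P a b * (1 - uu b) <= \sum_(z <- en B) P a z * (1 - uu z).
  apply: (term_le_sum (f := fun z => P a z * (1 - uu z))); first by rewrite mem_en //; apply/asboolP.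
  by move=> z _; apply: mulr_ge0; [exact: P_ge0|rewrite subr_ge0 uu_le1].
have h4 : \sum_(z <- en B) P a z * (1 - uu z) = \sum_(z <- en B) P a z - \sum_(z <- en B) P a z * uu z.
  by rewrite -sumrB; apply: eq_bigr => z _; rewrite mulrBr mulr1.
rewrite mulrC; lra.
Qed.

End U.
Section PerN.
Variables (K A S2 : set T) (p : T -> R).
Hypotheses (fA : finite_set A) (KA : K `<=` A) (K0 : K !=set0).
Hypothesis hS2 : K `<=` S2 /\ closed_comm_class (Sprime P K A) (Rmat P K A) S2.
Hypothesis hp : stationary_on S2 (Rmat P K A) p.
Hypothesis hirr : irreducible P.

Local Notation u := (uu K A).
Local Notation Rm := (Rmat P K A).

Lemma S2_Sp x : S2 x -> Sprime P K A x. Proof. by move=> h; apply: hS2.2.1. Qed.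
Lemma S2_A x : S2 x -> A x. Proof. by move=> /S2_Sp []. Qed.
Lemma fS2 : finite_set S2. Proof. exact: (sub_finite_set S2_A fA). Qed.

Lemma u_pos x : S2 x -> 0 < u x.
Proof. by move=> /S2_Sp [_]; rewrite (uvec_bounds fA KA x).1 lte_fin. Qed.

Lemma Rm_S2 x y : S2 x -> S2 y ->
  Rm x y = if `[< K y >] then P x y / u x else P x y * u y / u x.
Proof. by move=> Sx Sy; rewrite /Rmat /= (asboolT (S2_Sp Sx)) (asboolT (S2_Sp Sy)). Qed.

Lemma Rm_pos x y : 0 < Rm x y -> Sprime P K A y /\ 0 < P x y.
Proof.
rewrite /Rmat /= => H; case: (pselect (Sprime P K A y)) => Sy; last first.
  by move: H; rewrite (asboolF Sy) andbF /= ltxx.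
split => //; rewrite lt_def P_ge0 // andbT; apply/negP => /eqP P0.
by move: H; rewrite P0 !mul0r if_same if_same ltxx.
Qed.

Lemma p_ge0 x : 0 <= p x. Proof. exact: hp.1. Qed.
Lemma p_out x : ~ S2 x -> p x = 0. Proof. exact: hp.2.1. Qed.
Lemma p_sum : \sum_(x <- en S2) p x = 1.
Proof.
apply: EFin_inj; rewrite -sumEFin -[RHS]hp.2.2.1 esum_seqE //; first exact: fS2.
by move=> x _; rewrite lee_fin p_ge0.
Qed.
Lemma p_stat y : S2 y -> \sum_(x <- en S2) p x * Rm x y = p y.
Proof.
move=> Sy; apply: EFin_inj; rewrite -sumEFin -(hp.2.2.2 y Sy) esum_seqE //; first exact: fS2.
move=> x Sx; rewrite lee_fin; apply: mulr_ge0; first exact: p_ge0.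
rewrite Rm_S2 //; have := u_pos Sx; have := u_pos Sy; have := P_ge0 x y.
by case: ifP => _ *; [apply: divr_ge0 | apply: divr_ge0; [apply: mulr_ge0|]]; lra.
Qed.

Lemma path_S2 s x : S2 x -> path (fun a b => 0 < Rm a b) x s -> S2 (last x s).
Proof.
elim: s x => [//|y s IH] x Sx /= /andP[hxy hp']; apply: IH hp'.
have [Sy _] := Rm_pos hxy; exact: hS2.2.2.2.2 x y Sx Sy hxy.
Qed.

Definition rho x := p x / (u x * pi x).

Lemma rho_ge0 x : S2 x -> 0 <= rho x.
Proof.
move=> Sx; apply: divr_ge0; first exact: p_ge0.
by apply: mulr_ge0; [exact: ltW (u_pos Sx)|exact: pi_ge0].
Qed.

Lemma p_rho x : S2 x -> p x = rho x * u x * pi x.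
Proof.
move=> Sx; have := u_pos Sx; have := pi_pos hirr x => h1 h2.
rewrite /rho -mulrA divfK //; apply: mulf_neq0; apply: lt0r_neq0 => //.
Qed.

Lemma ex_kS2 : exists k, K k. Proof. by case: K0 => k Kk; exists k. Qed.

Definition ystar := let: exist k _ := cid ex_kS2 in k.

Lemma argmax_rho : exists2 y, S2 y & forall x, S2 x -> rho x <= rho y.
Proof.
have [k Kk] := ex_kS2.
have kS : k \in en S2 by rewrite mem_en; [apply/asboolP; exact: hS2.1|exact: fS2].
have [y ys hy] := argmax_seq rho kS.
exists y; first by move: ys; rewrite mem_en; [move/asboolP|exact: fS2].
by move=> x Sx; apply: hy; rewrite mem_en; [apply/asboolP|exact: fS2].
Qed.

Lemma inS2 x : S2 x -> x \in en S2.
Proof. by move=> Sx; rewrite mem_en; [apply/asboolP|exact: fS2]. Qed.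
Lemma ofS2 x : x \in en S2 -> S2 x.
Proof. by rewrite mem_en; [move/asboolP|exact: fS2]. Qed.

Section Max.
Variable M : R.
Hypothesis hM : forall x, S2 x -> rho x <= M.

Lemma max_principle y x : S2 y -> ~ K y -> rho y = M -> S2 x -> 0 < P x y -> rho x = M.
Proof.
move=> Sy nKy ry Sx Pxy; apply/eqP; rewrite eq_le hM //=.
have hsum : \sum_(z <- en S2) rho z * pi z * P z y = M * pi y.
  have h := p_stat Sy.
  have hu := u_pos Sy.
  have e1 : \sum_(z <- en S2) p z * Rm z y = u y * \sum_(z <- en S2) rho z * pi z * P z y.
    rewrite mulr_sumr big_seq [RHS]big_seq; apply: eq_bigr => z /ofS2 Sz.
    rewrite Rm_S2 // (asboolF nKy) p_rho //.
    have := u_pos Sz => hz. field; exact: lt0r_neq0.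
  rewrite e1 p_rho // ry in h.
  apply: (mulfI (lt0r_neq0 hu)); rewrite h; ring.
have hpiy := piP_le y (en_uniq S2).
have M0 : 0 <= M by rewrite -ry; exact: rho_ge0.
have hd : \sum_(z <- en S2) (M - rho z) * (pi z * P z y) <= 0.
  have -> : \sum_(z <- en S2) (M - rho z) * (pi z * P z y) =
     M * \sum_(z <- en S2) pi z * P z y - \sum_(z <- en S2) rho z * pi z * P z y.
    rewrite mulr_sumr -sumrB; apply: eq_bigr => z _; ring.
  rewrite hsum; have := ler_wpM2l M0 hpiy; lra.
have ht : (M - rho x) * (pi x * P x y) <= \sum_(z <- en S2) (M - rho z) * (pi z * P z y).
  apply: (term_le_sum (f := fun z => (M - rho z) * (pi z * P z y))); first exact: inS2.
  move=> z /ofS2 Sz; apply: mulr_ge0; first by have := hM Sz; lra.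
  by apply: mulr_ge0; [exact: pi_ge0|exact: P_ge0].
have hp0 : 0 < pi x * P x y by apply: mulr_gt0 => //; exact: pi_pos.
have : (M - rho x) * (pi x * P x y) <= 0 by lra.
by rewrite pmulr_lle0 // subr_le0.
Qed.

Lemma find_k0 : (exists2 y, S2 y & rho y = M) -> exists2 k0, K k0 & rho k0 = M.
Proof.
move=> [y Sy ry].
have [k Kk] := ex_kS2.
have Sk : S2 k by exact: hS2.1.
have [s [hps hl]] := hS2.2.2.2.1 k y Sk Sy.
elim/last_ind: s y Sy ry hps hl => [|s w IH] y Sy ry hps hl.
  by exists k => //; rewrite /= in hl; rewrite hl.
rewrite last_rcons in hl; subst w.
move: hps; rewrite rcons_path => /andP[hps hlast].
case: (pselect (K y)) => Ky; first by exists y.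
have Sv := path_S2 Sk hps.
have [_ Pvy] := Rm_pos hlast.
have rv := max_principle Sy Ky ry Sv Pvy.
exact: (IH (last k s) Sv rv hps erefl).
Qed.

End Max.

Lemma perN : exists2 k0, K k0 & exists w : T -> R,
  [/\ forall x, 0 <= w x <= pi x, w k0 = pi k0, forall x, u x * w x <= p x &
      forall a b, (pi a - w a) * P a b <= (pi b - w b) + ee K A].
Proof.
have [ys Sys hys] := argmax_rho.
set M := rho ys.
have [k0 Kk0 rk0] := find_k0 hys (ex_intro2 _ _ ys Sys erefl).
have M0 : 0 <= M by exact: rho_ge0.
have M1 : 1 <= M.
  rewrite -p_sum big_seq.
  apply: (le_trans (y := \sum_(x <- en S2 | x \in en S2) M * pi x)).
    apply: ler_sum => x /ofS2 Sx; rewrite p_rho //.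
    have := rho_ge0 Sx; have := hys x Sx; have := uu_ge0 fA KA x; have := uu_le1 fA KA x.
    have := pi_ge0 x; rewrite -/M => h1 h2 h3 h4 h5.
    have h6 : rho x * uu K A x <= M by nra.
    by apply: ler_wpM2r.
  rewrite -big_seq -mulr_sumr; have := pi_le1 (en_uniq S2); nra.
have Mgt0 : 0 < M by lra.
pose w x := if `[< S2 x >] then rho x * pi x / M else 0.
have wE x : S2 x -> w x = p x / (u x * M).
  move=> Sx; rewrite /w asboolT // /rho.
  have := u_pos Sx; have := pi_pos hirr x => h1 h2.
  field; apply/and3P; split; apply: lt0r_neq0 => //.
have w0 x : ~ S2 x -> w x = 0 by move=> nS; rewrite /w asboolF.
have wb x : 0 <= w x <= pi x.
  case: (pselect (S2 x)) => Sx; last by rewrite w0 // lexx pi_ge0.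
  rewrite /w asboolT //; apply/andP; split.
    by apply: divr_ge0 => //; apply: mulr_ge0; [exact: rho_ge0|exact: pi_ge0].
  rewrite ler_pdivrMr //; have := hys x Sx; have := pi_ge0 x; rewrite -/M; nra.
exists k0 => //; exists w; split => //.
- by rewrite /w asboolT; [rewrite rk0 mulrAC divff ?mul1r //; exact: lt0r_neq0|exact: hS2.1].
- move=> x; case: (pselect (S2 x)) => Sx; last by rewrite w0 // p_out // mulr0.
  rewrite wE //; have := u_pos Sx => hu.
  have -> : u x * (p x / (u x * M)) = p x / M by field; apply/andP; split; apply: lt0r_neq0.
  rewrite ler_pdivrMr //; have := p_ge0 x; nra.
move=> a b.
pose Sw := \sum_(x <- en S2) w x * P x b.
have hSw0 : 0 <= Sw.
  by apply: sumr_ge0 => x _; apply: mulr_ge0; [by have /andP[] := wb x|exact: P_ge0].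
have hSwpi : Sw <= \sum_(x <- en S2) pi x * P x b.
  by apply: ler_sum => x _; apply: ler_wpM2r; [exact: P_ge0|by have /andP[] := wb x].
have step1 : (pi a - w a) * P a b <= pi b - Sw.
  case: (pselect (S2 a)) => Sa.
    have h := piP_le b (en_uniq S2).
    have ht : (pi a - w a) * P a b <= \sum_(x <- en S2) (pi x - w x) * P x b.
      apply: (term_le_sum (f := fun x => (pi x - w x) * P x b)); first exact: inS2.
      by move=> x _; apply: mulr_ge0; [by have /andP[_] := wb x; rewrite subr_ge0|exact: P_ge0].
    have : \sum_(x <- en S2) (pi x - w x) * P x b = \sum_(x <- en S2) pi x * P x b - Sw.
      by rewrite /Sw -sumrB; apply: eq_bigr => x _; rewrite mulrBl.
    lra.
  have ua : uniq (a :: en S2).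
    rewrite /= en_uniq andbT; apply/negP => /ofS2; exact: Sa.
  have := piP_le b ua; rewrite big_cons w0 // subr0; lra.
apply: (le_trans step1).
case: (pselect (S2 b)) => Sb; last by rewrite w0 // subr0; have := ee_ge0 fA KA; lra.
have hSwE : Sw = M^-1 * \sum_(x <- en S2) p x * Rm x b * (if `[< K b >] then 1 else (u b)^-1).
  rewrite /Sw mulr_sumr big_seq [RHS]big_seq; apply: eq_bigr => x /ofS2 Sx.
  rewrite wE // Rm_S2 //; have := u_pos Sx; have := u_pos Sb => h1 h2.
  case: ifP => _; field; rewrite ?(lt0r_neq0 h1) ?(lt0r_neq0 h2) ?(lt0r_neq0 Mgt0) //.
have hst := p_stat Sb.
rewrite -big_distrl /= hst in hSwE.
have hub := u_pos Sb.
case: (pselect (K b)) => Kb.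
  rewrite asboolT // mulr1 in hSwE.
  have e2 : Sw = u b * w b by rewrite hSwE wE //; field; apply/andP; split; apply: lt0r_neq0.
  have := piK_le_ee fA KA Kb; have /andP[wb0 wb1] := wb b; have := uu_le1 fA KA b.
  rewrite e2; nra.
rewrite asboolF // in hSwE.
have e2 : Sw = w b by rewrite hSwE wE //; field; apply/andP; split; apply: lt0r_neq0.
by rewrite e2; have := ee_ge0 fA KA; lra.
Qed.

Lemma p_seq_le1 s : uniq s -> \sum_(x <- s) p x <= 1.
Proof.
move=> us; rewrite (bigID (fun x => x \in en S2)) /=.
rewrite [X in _ + X]big1 ?addr0; last by move=> x hx; apply: p_out => Sx; move/negP: hx; apply; exact: inS2.
rewrite -big_filter -p_sum; apply: sum_sub; [exact: filter_uniq|exact: en_uniq| |].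
  by move=> x; rewrite mem_filter => /andP[].
by move=> x _; exact: p_ge0.
Qed.

End PerN.

End Chain.

Lemma evseq (T : eqType) (Q : nat -> T -> Prop) :
  (forall y, exists N, forall n, (N <= n)%N -> Q n y) ->
  forall s : seq T, exists N, forall n, (N <= n)%N -> forall y, y \in s -> Q n y.
Proof.
move=> h; elim=> [|a s [N IH]]; first by exists 0%N.
have [Na ha] := h a; exists (maxn Na N) => n hn y; rewrite in_cons => /orP[/eqP->|ys].
  by apply: ha; apply: leq_trans hn; rewrite leq_maxl.
by apply: IH => //; apply: leq_trans hn; rewrite leq_maxr.
Qed.

Lemma sum_lower (R : realType) (T : eqType) (r : seq T) (f g : T -> R) c :
  (forall y, y \in r -> f y - c <= g y) ->
  \sum_(y <- r) f y - (size r)%:R * c <= \sum_(y <- r) g y.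
Proof.
elim: r => [|a r IH] h; first by rewrite !big_nil mul0r subr0.
rewrite !big_cons /= -add1n natrD mulrDl mul1r.
have h1 := h a (mem_head _ _).
have h2 := IH (fun y hy => h y (@mem_behead _ (a :: r) y hy)).
lra.
Qed.

Theorem theorem5p2 (R : realType) (T : countType) (P : T -> T -> R) (piS : T -> R)
  (K : set T) (A : nat -> set T)
  (hP : stochastic P) (hirr : irreducible P) (hpr : positive_recurrent P)
  (hpi : stationary_distribution P piS)
  (hKfin : finite_set K) (hK0 : K !=set0)
  (hAfin : forall n, finite_set (A n)) (hKA : forall n, K `<=` A n)
  (hAmono : forall n, A n `<=` A n.+1) (hAcov : \bigcup_n A n = [set: T])
  (hG : forall n, irreducible_on K (Gmat P K (A n)))
  (S2 : nat -> set T) (pi3 : nat -> T -> R)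
  (hS2 : forall n, K `<=` S2 n /\
          closed_comm_class (Sprime P K (A n)) (Rmat P K (A n)) (S2 n))
  (hpi3 : forall n, stationary_on (S2 n) (Rmat P K (A n)) (pi3 n)) :
  forall x : T, (fun n => pi3 n x) @ \oo --> piS x.
Proof.
move=> x.
have Amono : forall m n, (m <= n)%N -> A m `<=` A n.
  move=> m n; elim: n => [|n IH]; first by rewrite leqn0 => /eqP->.
  rewrite leq_eqVlt => /orP[/eqP->//|]; rewrite ltnS => /IH h z /h; exact: hAmono.
have evA : forall s : seq T, exists N, forall n, (N <= n)%N -> forall y, y \in s -> A n y.
  apply: evseq => y.
  have : [set: T] y by [].
  rewrite -hAcov => -[N _ hN].
  by exists N => n hn; exact: (Amono _ _ hn _ hN).
have inA : forall n y, A n y -> y \in en (A n).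
  by move=> n y h; rewrite mem_en //; apply/asboolP.
pose u n := uu P K (A n).
pose e n := ee P piS K (A n).
have e0 n : 0 <= e n := ee_ge0 hP hpi (hAfin n) (hKA n).
have ecvg : forall eps, 0 < eps -> exists N, forall n, (N <= n)%N -> e n <= eps.
  move=> eps he.
  have hb n := e_bound hP hpi (hAfin n) (hKA n).
  have h1 n := pi_le1 hpi (en_uniq (A n)).
  have hnn n : 0 <= \sum_(y <- en (A n)) piS y * \sum_(z <- en (A n)) P y z.
    apply: sumr_ge0 => y _; apply: mulr_ge0; first exact: pi_ge0 hpi y.
    by apply: sumr_ge0 => z _; exact: P_ge0.
  case: (leP 1 eps) => heps.
    exists 0%N => n _; have := hb n; have := h1 n; have := hnn n; rewrite /e; lra.
  pose d := eps / 2.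
  have hd : 0 < d by rewrite /d; lra.
  have [sp [usp hsp]] := pi_approx hpi hd.
  have [g hg] := choice (fun y => stoch_approx hP y hd).
  have [N hN] := evA (sp ++ flatten (map g sp)).
  exists N => n hn.
  have h2 : (1 - d) * (1 - d) <= \sum_(y <- en (A n)) piS y * \sum_(z <- en (A n)) P y z.
    apply: (le_trans (y := \sum_(y <- sp) piS y * \sum_(z <- en (A n)) P y z)); last first.
      apply: sum_sub => //; first exact: en_uniq.
        by move=> y ys; apply: inA; apply: (hN n hn y); rewrite mem_cat ys.
      move=> y _; apply: mulr_ge0; first exact: pi_ge0 hpi y.
      by apply: sumr_ge0 => z _; exact: P_ge0.
    apply: (le_trans (y := \sum_(y <- sp) piS y * (1 - d))).
      rewrite -mulr_suml; apply: ler_wpM2r; [rewrite /d; lra|exact: ltW].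
    rewrite big_seq [X in _ <= X]big_seq; apply: ler_sum => y ys.
    apply: ler_wpM2l; first exact: pi_ge0 hpi y.
    have [ug hgy] := hg y.
    apply: (le_trans (ltW hgy)); apply: sum_sub => //; first exact: en_uniq.
      move=> z zg; apply: inA; apply: (hN n hn z); rewrite mem_cat; apply/orP; right.
      by apply/flatten_mapP; exists y.
    by move=> z _; exact: P_ge0.
  have ed : eps = d * 2 by rewrite /d divfK.
  have := hb n; have := h1 n; rewrite /e ed; nra.
have ucvg : forall y eps, 0 < eps -> exists N, forall n, (N <= n)%N -> 1 - u n y <= eps.
  move=> y eps he.
  have [k [Kk [C [C0 [N0 hN0]]]]] : exists k, K k /\ exists C, 0 <= C /\ exists N0,
      forall n, (N0 <= n)%N -> 1 - u n y <= C * (1 - u n k).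
    case: (pselect (K y)) => Ky.
      by exists y; split => //; exists 1; split => //; exists 0%N => n _; rewrite mul1r.
    have [k Kk] := hK0.
    have [s [hp hl]] := hirr k y.
    have [k' [s' [hk' hall hp' hl']]] := path_lastK (fun z => `[< K z >]) hp.
    have Kk' : K k' by case: hk' => [->|/asboolP].
    have [C [C0 HC]] := path_fwd hp'.
    have [N0 hN0] := evA s'.
    exists k'; split => //; exists C; split => //; exists N0 => n hn.
    have := HC (fun z => 1 - u n z) 0 (fun b => `[< (A n `\` K) b >]).
    rewrite hl' hl addr0; apply.
    - by move=> a b /asboolP Bb; exact: (v_step hP (hAfin n) (hKA n) a Bb).
    - apply/allP => z zs; apply/asboolP; split; first exact: hN0 n hn z zs.
      by have := allP hall z zs => /= /asboolPn.
    - by move=> z; rewrite subr_ge0; exact: uu_le1.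
    - by [].
  have pk := pi_pos hpi hirr k.
  pose dl := eps / (C + 1).
  have hdl : 0 < dl by rewrite /dl; apply: divr_gt0 => //; lra.
  have edl : dl * (C + 1) = eps by rewrite /dl divfK //; apply: lt0r_neq0; lra.
  have [N1 hN1] := ecvg (dl * piS k) (mulr_gt0 hdl pk).
  exists (maxn N0 N1) => n hn.
  have h0 := hN0 n (leq_trans (leq_maxl _ _) hn).
  have h1 := hN1 n (leq_trans (leq_maxr _ _) hn).
  have h2 := piK_le_ee hP hpi (hAfin n) (hKA n) Kk.
  have h3 : 1 - u n k <= dl.
    have : piS k * (1 - u n k) <= piS k * dl by rewrite /e in h1; rewrite /u; lra.
    by rewrite ler_pM2l.
  nra.
have lower : forall y eps, 0 < eps -> exists N, forall n, (N <= n)%N -> piS y - eps <= pi3 n y.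
  move=> y eps he.
  have HC : forall k, exists C : R, 0 <= C /\ forall (d : T -> R) (e : R),
      (forall a b, d a * P a b <= d b + e) -> (forall z, 0 <= d z) -> 0 <= e ->
      d y <= C * (d k + e).
    move=> k; have [s [hp hl]] := hirr y k.
    have [C [C0 HC]] := path_bwd hp.
    by exists C; split => // d e' h1 h2 h3; rewrite -hl; exact: HC.
  have [Cf hCf] := choice HC.
  pose Cx := \sum_(k <- en K) Cf k.
  have Cx0 : 0 <= Cx by apply: sumr_ge0 => k _; exact: (hCf k).1.
  have hlow : forall n, piS y - Cx * e n - (1 - u n y) <= pi3 n y.
    move=> n.
    have [k0 Kk0 [w [wb wk0 wu hw]]] :=
      perN hP hpi (hAfin n) (hKA n) hK0 (hS2 n) (hpi3 n) hirr.
    have hd := (hCf k0).2 (fun z => piS z - w z) (e n) hw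
      (fun z => ltac:(by have /andP[_] := wb z; rewrite subr_ge0)) (e0 n).
    rewrite /= wk0 subrr add0r in hd.
    have hCk : Cf k0 <= Cx.
      apply: (term_le_sum (f := Cf)); first by rewrite mem_en //; apply/asboolP.
      by move=> k _; exact: (hCf k).1.
    have := wu y; have /andP[w0 w1] := wb y; have := pi_le1x hpi y.
    have := uu_le1 hP (hAfin n) (hKA n) y; have := uu_ge0 hP (hAfin n) (hKA n) y.
    have := e0 n; rewrite /u; nra.
  pose dl := eps / 2 / (Cx + 1).
  have hdl : 0 < dl by rewrite /dl; apply: divr_gt0; lra.
  have edl : dl * (Cx + 1) = eps / 2 by rewrite /dl divfK //; apply: lt0r_neq0; lra.
  have [N1 hN1] := ecvg dl hdl.
  have [N2 hN2] := ucvg y (eps / 2) (ltac:(lra)).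
  exists (maxn N1 N2) => n hn.
  have h1 := hN1 n (leq_trans (leq_maxl _ _) hn).
  have h2 := hN2 n (leq_trans (leq_maxr _ _) hn).
  have := hlow n; nra.
apply/cvgrPdist_le => eps he.
pose d := eps / 2.
have hd : 0 < d by rewrite /d; lra.
have [s0 [us0 hs0]] := pi_approx hpi hd.
have [s [us xs hs]] : exists s, [/\ uniq s, x \in s & 1 - d < \sum_(y <- s) piS y].
  case xs0: (x \in s0); first by exists s0; split.
  exists (x :: s0); split; [by rewrite /= xs0| exact: mem_head|].
  by rewrite big_cons; have := pi_ge0 hpi x; lra.
pose r := rem x s.
pose c := d / ((size r)%:R + 1).
have hc : 0 < c by rewrite /c; apply: divr_gt0 => //; rewrite ltr_wpDl.
have hcs : (size r)%:R * c <= d.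
  rewrite /c mulrA ler_pdivrMr; last by rewrite ltr_wpDl.
  have := ltW hd; have : 0 <= (size r)%:R :> R by []; nra.
have [N1 hN1] := @evseq _ (fun n y => piS y - c <= pi3 n y)
  (fun y => lower y c hc) r.
have [N2 hN2] := lower x eps he.
apply: filterS (nbhs_infty_ge (maxn N1 N2)) => n hn.
have h1 := hN1 n (leq_trans (leq_maxl _ _) hn).
have h2 := hN2 n (leq_trans (leq_maxr _ _) hn).
have hsl := sum_lower h1.
have hsum := p_seq_le1 (hAfin n) (hS2 n) (hpi3 n) us.
rewrite (big_rem x xs) /= -/r in hsum.
rewrite (big_rem x xs) /= -/r in hs.
have ed : eps = d * 2 by rewrite /d divfK.
have := @pi_le1x _ _ _ _ hpi x.
move=> hx1; rewrite ler_norml; apply/andP; split; lra.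
Qed.
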